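(* Let $G(V,E)$ be a graph with nonnegative edge weights $w$, let $\pi$ be a permutation of $E$ in non-increasing order of weight, and let $G^{(1)},\ldots,G^{(k)}$ be subgraphs of $G$ on vertex set $V$ (e.g. an outcome of a random $k$-clustering). For $i\in[k]$ let $M_i:=\mathsf{Greedy}(G^{(i)},\pi)$ and let $H$ be the graph on $V$ with edge set $\bigcup_{i} M_i$. Fix a maximum weight matching $M^*$ of $G$. Call $e\in M^*$ free for machine $1$ if no endpoint of $e$ is matched by $\mathsf{Greedy}(G^{(1)},\pi^{<e})$, and blocked otherwise; let $F_1$ and $B_1$ be the sets of free and blocked edges of $M^*$ for machine $1$, and let $F'_1:=F_1\cap E(H)$. Then $$\mathrm{opt}(H) \geq \frac12\left(w(F'_1)+w(B_1)\right).$$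
   Context: $\mathrm{opt}(H)$ is the weight of a maximum weight matching of $H$; $w(S)$ is the total weight of an edge set $S$. $\mathsf{Greedy}(G,\pi)$ scans the edges of $G$ in the order $\pi$ (restricted to the edges of $G$) and adds an edge $(u,v)$ iff neither endpoint is already matched. $\pi^{<e}$ is the set of edges preceding $e$ in $\pi$, and $\mathsf{Greedy}(G^{(1)},\pi^{<e})$ means running $\mathsf{Greedy}(G^{(1)},\pi)$ and stopping just before processing $e$. Whether $e$ is free or blocked does not depend on whether $e$ belongs to $G^{(1)}$. *)

(* Defs.v *)
From mathcomp Require Import all_boot all_order all_algebra.
Set Implicit Arguments. Unset Strict Implicit. Unset Printing Implicit Defensive.
Import Order.TTheory GRing.Theory Num.Theory.
Local Open Scope ring_scope.

(* Simple graphs on a finite vertex type V: an edge is a 2-element subset of V,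
   a graph (on vertex set V) is given by its edge set. *)
Section Defs.
Variable V : finType.

Definition edge_set (E : {set {set V}}) : bool := [forall e in E, #|e| == 2%N].

Definition matching (M : {set {set V}}) : bool :=
  [forall e in M, #|e| == 2%N] &&
  [forall e in M, forall f in M, (e != f) ==> [disjoint e & f]].

Fixpoint greedy_from (S : {set {set V}}) (s : seq {set V}) (M : {set {set V}})
  : {set {set V}} :=
  match s with
  | [::] => M
  | e :: s' =>
      greedy_from S s'
        (if (e \in S) && [disjoint e & cover M] then e |: M else M)
  end.

Definition Greedy (S : {set {set V}}) (pi : seq {set V}) : {set {set V}} :=
  greedy_from S pi set0.

Definition prefix_before (pi : seq {set V}) (e : {set V}) : seq {set V} :=
  take (index e pi) pi.

Variable R : realFieldType.

Definition wsum (w : {set V} -> R) (S : {set {set V}}) : R := \sum_(e in S) w e.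

(* opt(H): maximum weight of a matching of H (weights nonnegative, so 0 is a
   valid neutral element: the empty matching has weight 0). *)
Definition opt (w : {set V} -> R) (H : {set {set V}}) : R :=
  \big[Num.max/0]_(M : {set {set V}} | (M \subset H) && matching M) wsum w M.

End Defs.

(* Main.v *)
Require Import Defs.
From mathcomp Require Import all_boot all_order all_algebra.
From mathcomp Require Import lra.
Import Order.TTheory GRing.Theory Num.Theory.

Set Implicit Arguments. Unset Strict Implicit.
Section G.
Variable V : finType.
Implicit Types (S M : {set {set V}}) (s : seq {set V}).

Lemma greedy_sub S s M : M \subset greedy_from S s M.
Proof.
elim: s M => [|e s IH] M /=; first exact: subxx.
apply: subset_trans (IH _); case: ifP => _ //; exact: subsetUr.
Qed.

Lemma greedy_mem S s M f : f \in greedy_from S s M -> f \in M \/ (f \in S /\ f \in s).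
Proof.
elim: s M => [|e s IH] M /=; first by left.
move=> /IH [|[H1 H2]]; last by right; rewrite inE H2 orbT.
case: ifP => [/andP[eS _]|_]; last by left.
rewrite in_setU1 => /orP[/eqP->|]; [right; rewrite inE eqxx|left]; by [].
Qed.

Lemma greedy_cat S s1 s2 M :
  greedy_from S (s1 ++ s2) M = greedy_from S s2 (greedy_from S s1 M).
Proof. by elim: s1 M => [|e s IH] M //=. Qed.

Lemma matchingP M :
  reflect ((forall e, e \in M -> #|e| = 2) /\
           (forall e f, e \in M -> f \in M -> e != f -> [disjoint e & f]))
          (matching M).
Proof.
apply: (iffP andP) => [[/forallP H1 /forallP H2]|[H1 H2]]; split.
- by move=> e eM; move: (H1 e); rewrite eM => /eqP.
- by move=> e f eM fM; move: (H2 e) => /implyP/(_ eM)/forallP/(_ f)/implyP/(_ fM)/implyP.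
- by apply/forallP => e; apply/implyP => eM; rewrite H1.
- apply/forallP => e; apply/implyP => eM; apply/forallP => f; apply/implyP => fM.
  by apply/implyP; apply: H2.
Qed.

Lemma sub_cover M f : f \in M -> f \subset cover M.
Proof. by move=> fM; apply/subsetP => x xf; apply/bigcupP; exists f. Qed.

Lemma greedy_matching S s M : (forall e, e \in S -> #|e| = 2) ->
  matching M -> matching (greedy_from S s M).
Proof.
move=> HS; elim: s M => [|e s IH] M //= mM; apply: IH.
case: ifP => // /andP[eS de]; case/matchingP: mM => H1 H2.
apply/matchingP; split.
  by move=> f; rewrite in_setU1 => /orP[/eqP->|]; [apply: HS|apply: H1].
move=> f g; rewrite !in_setU1 => /orP[/eqP->|fM] /orP[/eqP->|gM]; rewrite ?eqxx //.
- by move=> _; apply: disjointWr de; apply: sub_cover.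
- by move=> _; rewrite disjoint_sym; apply: disjointWr de; apply: sub_cover.
- exact: H2.
Qed.

End G.
Lemma card_touch (V : finType) (M : {set {set V}}) (f : {set V}) :
  matching M -> #|[set e in M | ~~ [disjoint e & f]]| <= #|f|.
Proof.
case/matchingP=> _ H2.
set T := [set e in M | _].
pose g (e : {set V}) := [pick v in e :&: f].
have gT : {in T, forall e, exists2 v, g e = Some v & (v \in e) && (v \in f)}.
  move=> e; rewrite inE => /andP[_ /pred0Pn[v /andP[ve vf]]].
  rewrite /g; case: pickP => [u|/(_ v)]; last by rewrite inE (ve : v \in e) (vf : v \in f).
  by rewrite inE => uef; exists u.
have inj : {in T &, injective g}.
  move=> e1 e2 e1T e2T; have [v1 g1 /andP[v1e1 _]] := gT _ e1T.
  have [v2 g2 /andP[v2e2 _]] := gT _ e2T.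
  rewrite g1 g2 => -[v12]; apply/eqP/negPn/negP => ne.
  move: e1T e2T; rewrite !inE => /andP[e1M _] /andP[e2M _].
  by move: (H2 _ _ e1M e2M ne) => /disjointFr/(_ v1e1); rewrite v12 v2e2.
rewrite -(card_in_imset inj) -(card_imset f (@Some_inj _)).
apply: subset_leq_card; apply/subsetP => o /imsetP[e eT ->].
have [v -> /andP[_ vf]] := gT _ eT; exact: imset_f.
Qed.

Unset Implicit Arguments.
Local Open Scope ring_scope.

Theorem lemma3p3 (R : realFieldType) (V : finType) (E : {set {set V}})
    (w : {set V} -> R) (pi : seq {set V}) (k : nat)
    (Gs : 'I_k.+1 -> {set {set V}}) (Mstar : {set {set V}}) :
  edge_set E ->
  (forall e, e \in E -> 0 <= w e) ->
  perm_eq pi (enum E) ->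
  sorted (fun e f => w f <= w e) pi ->
  (forall i, Gs i \subset E) ->
  Mstar \subset E -> matching Mstar ->
  (forall M : {set {set V}}, M \subset E -> matching M -> wsum w M <= wsum w Mstar) ->
  let H := \bigcup_(i < k.+1) Greedy (Gs i) pi in
  let F1 := [set e in Mstar |
              [disjoint e & cover (Greedy (Gs ord0) (prefix_before pi e))]] in
  let B1 := Mstar :\: F1 in
  let F1' := F1 :&: H in
  opt w H >= (wsum w F1' + wsum w B1) / 2.
Proof.
move=> HE Hw Hpi Hsort HG HMs mMs _; cbv zeta.
set H := \bigcup_(i < k.+1) _.
set F1 := [set e in Mstar | _].
set B1 := Mstar :\: F1.
set F1' := F1 :&: H.
set G1 := Gs ord0.
set M1 := Greedy G1 pi.
have E2 : forall e, e \in E -> #|e| = 2%N.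
  by move=> e eE; move/forallP: HE => /(_ e); rewrite eE => /eqP.
have M1G : M1 \subset G1.
  by apply/subsetP => f /greedy_mem[|[]//]; rewrite inE.
have M1E : M1 \subset E := subset_trans M1G (HG _).
have M1H : M1 \subset H by apply: (bigcup_sup ord0).
have mM1 : matching M1.
  have HS : forall e, e \in G1 -> #|e| = 2%N.
    by move=> e eG; apply: E2; exact: (subsetP (HG ord0) e eG).
  apply: (greedy_matching _ HS).
  by apply/matchingP; split=> [e|e f]; rewrite inE.
have MsE2 : forall e, e \in Mstar -> #|e| = 2%N.
  by move=> e eM; apply: E2; exact: (subsetP HMs e eM).
have F1'Ms : F1' \subset Mstar.
  by apply/subsetP => e; rewrite !inE => /andP[/andP[]].
have blk : forall e, e \in B1 -> exists f, (f \in M1) && ~~ [disjoint f & e] && (w e <= w f).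
  move=> e; rewrite !inE => /andP[nF eM]; rewrite eM /= in nF.
  case/pred0Pn: nF => x /andP[xe /bigcupP[f fP xf]].
  exists f.
  have ePi : e \in pi by rewrite (perm_mem Hpi) mem_enum (subsetP HMs).
  move: fP; rewrite /Greedy /prefix_before => fP.
  have fM1 : f \in M1.
    rewrite /M1 /Greedy -(cat_take_drop (index e pi) pi) greedy_cat.
    exact: (subsetP (greedy_sub _ _ _)).
  have ftake : f \in take (index e pi) pi.
    by case: (greedy_mem fP) => [|[]//]; rewrite inE.
  rewrite fM1 /=; apply/andP; split.
    by apply/pred0Pn; exists x; rewrite /= (xf : x \in f) (xe : x \in e).
  have tr : transitive (fun e f : {set V} => w f <= w e).
    by move=> a b c /= h1 h2; apply: le_trans h2 h1.
  apply: (sorted_ltn_index tr Hsort) => //; first exact: mem_take ftake.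
  exact: index_ltn ftake.
pose phi (e : {set V}) := odflt set0 [pick f : {set V} | (f \in M1) && ~~ [disjoint f & e] && (w e <= w f)].
have phiP : forall e, e \in B1 ->
    [/\ phi e \in M1, ~~ [disjoint phi e & e] & w e <= w (phi e)].
  move=> e eB; rewrite /phi; case: pickP => [f /andP[/andP[-> ->] ->]|none] //.
  by case: (blk e eB) => f; rewrite none.
have B1Ms : forall e, e \in B1 -> e \in Mstar.
  by move=> e; rewrite inE => /andP[].
pose M1d := [set f in M1 | [disjoint f & cover F1']].
pose c (f : {set V}) := if [disjoint f & cover F1'] then 2%N else 1%N.
have cnt : forall f, f \in M1 -> (#|[set e in B1 | phi e == f]| <= c f)%N.
  move=> f fM1.
  have sub : [set e in B1 | phi e == f] \subset [set e in Mstar | ~~ [disjoint e & f]].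
    apply/subsetP => e; rewrite inE => /andP[eB /eqP pf].
    have [_ d _] := phiP e eB.
    by rewrite inE B1Ms //= disjoint_sym -pf.
  have T2 := card_touch f mMs; rewrite (E2 f (subsetP M1E f fM1)) in T2.
  rewrite /c; case: ifP => dj.
    exact: leq_trans (subset_leq_card sub) T2.
  move/negbT: dj => /pred0Pn[x /andP[xf /bigcupP[e0 e0F xe0]]].
  have e0T : e0 \in [set e in Mstar | ~~ [disjoint e & f]].
    rewrite inE (subsetP F1'Ms e0 e0F) /=; apply/pred0Pn; exists x.
    by rewrite /= xe0 (xf : x \in f).
  have sub' : [set e in B1 | phi e == f] \subset
       [set e in Mstar | ~~ [disjoint e & f]] :\ e0.
    apply/subsetP => e eP; rewrite in_setD1 (subsetP sub e eP) andbT.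
    apply/eqP => ee0; move: eP; rewrite ee0 inE => /andP[eB _].
    have e0F1 : e0 \in F1 by move: e0F; rewrite in_setI => /andP[].
    by move: eB; rewrite in_setD e0F1.
  have := subset_leq_card sub'.
  move: T2; rewrite (cardsD1 e0) e0T /=.
  by move=> h1 h2; apply: leq_trans h2 _; rewrite add1n ltnS in h1.
have hB : wsum w B1 <= \sum_(f in M1) w f *+ c f.
  rewrite /wsum.
  apply: le_trans (_ : \sum_(e in B1) w (phi e) <= _).
    by apply: ler_sum => e eB; case: (phiP e eB).
  rewrite (partition_big phi (fun f => f \in M1)) /=; last by move=> e eB; case: (phiP e eB).
  apply: ler_sum => f fM1.
  rewrite (eq_bigr (fun _ => w f)); last by move=> e /andP[_ /eqP ->].
  rewrite (eq_bigl [in [set e in B1 | phi e == f]]) ?sumr_const; last by move=> e; rewrite inE.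
  rewrite -!(mulr_natr (w f)) ler_wpM2l ?ler_nat ?cnt //.
  exact: Hw (subsetP M1E f fM1).
have M1dF : forall f, f \in M1d -> f \notin F1'.
  move=> f; rewrite inE => /andP[fM1 dj]; apply/negP => fF.
  have : (0 < #|f|)%N by rewrite (E2 f (subsetP M1E f fM1)).
  case/card_gt0P => x xf.
  by move: (disjointFr dj xf); rewrite (subsetP (sub_cover fF) x xf).
pose A := \sum_(f in M1d) w f.
pose C := \sum_(f in M1 | ~~ [disjoint f & cover F1']) w f.
have hsplit : \sum_(f in M1) w f *+ c f = A + A + C.
  rewrite (bigID (fun f : {set V} => [disjoint f & cover F1'])) /=.
  rewrite (eq_bigr (fun f => w f *+ 2)); last by move=> f /andP[_ h]; rewrite /c h.
  rewrite [X in _ + X](eq_bigr (fun f => w f)); last by move=> f /andP[_ /negbTE h]; rewrite /c h.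
  rewrite sumrMnl mulr2n /A; congr (_ + _ + _); apply: eq_bigl => f; by rewrite inE.
have hM1 : wsum w M1 = A + C.
  rewrite /wsum (bigID (fun f : {set V} => [disjoint f & cover F1'])) /= /A.
  by congr (_ + _); apply: eq_bigl => f; rewrite inE.
pose N := F1' :|: M1d.
have hN : wsum w N = wsum w F1' + A.
  rewrite /wsum (bigID (fun f : {set V} => f \in F1')) /= /A.
  congr (_ + _); apply: eq_bigl => f; rewrite in_setU.
    by rewrite andb_idl // => ->.
  apply/idP/idP => [/andP[/orP[h|h] na]|h].
  - by rewrite h in na.
  - exact: h.
  - by rewrite h orbT /=; apply: M1dF.
have NH : N \subset H.
  apply/subsetP => f; rewrite in_setU => /orP[fF|].
    by move: fF; rewrite in_setI => /andP[].
  by rewrite inE => /andP[fM1 _]; apply: (subsetP M1H).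
have mN : matching N.
  case/matchingP: mMs => _ HMs2; case/matchingP: mM1 => _ HM12.
  have NF : forall f, f \in N -> (f \in F1') || (f \in M1) && [disjoint f & cover F1'].
    by move=> f; rewrite /N in_setU [f \in M1d]inE.
  apply/matchingP; split.
    move=> f /NF /orP[fF|/andP[fM1 _]].
      exact: MsE2 (subsetP F1'Ms f fF).
    exact: E2 (subsetP M1E f fM1).
  move=> e f /NF /orP[eF|/andP[eM1 de]] /NF /orP[fF|/andP[fM1 df]].
  - by apply: HMs2; apply: (subsetP F1'Ms).
  - by move=> _; rewrite disjoint_sym; apply: disjointWr df; apply: sub_cover.
  - by move=> _; apply: disjointWr de; apply: sub_cover.
  - exact: HM12.
have o1 : wsum w M1 <= opt w H.
  by rewrite /opt; apply: le_bigmax_cond; rewrite M1H mM1.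
have o2 : wsum w N <= opt w H.
  by rewrite /opt; apply: le_bigmax_cond; rewrite NH mN.
rewrite hsplit in hB; rewrite hM1 in o1; rewrite hN in o2.
lra.
Qed.
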